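(* (1) Every symmetric intersecting family is balanceable. (2) There exists a family (of subsets of some finite set) that is uniform and balanceable but not regular (and hence not symmetric). (3) There exists a family that is uniform, regular and intersecting but not balanceable.
   Context: Let $P$ be a finite set with $|P|=n$ (identified with $[n]$). A family $\mathcal{F}=(F_1,\dots,F_m)$ of subsets of $P$ is: intersecting if any two of its sets intersect; regular if every element of $P$ lies in the same number of sets of $\mathcal{F}$; uniform if all its sets have the same size; symmetric if for any $p,q\in P$ there is a bijection $\varphi:P\to P$ with $\varphi(p)=q$ and $\{\varphi(A):A\in\mathcal{F}\}=\mathcal{F}$; balanceable if there exist $w\in[0,1]^m$ with $\sum_i w_i=1$ and $s\in[0,1]^{m\times m\times n}$ with $\sum_p s_{ijp}=1$ for all $i,j$, such that (intersecting system) $s_{ijp}>0$ implies $p\in F_i\cap F_j$ for all $i,j,p$, and (balanced) $\sum_{i=1}^m\sum_{j=1}^m w_iw_js_{ijp}=1/n$ for all $p\in P$. *)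

(* Defs.v *)
From HB Require Import structures.
From mathcomp Require Import all_boot all_order all_algebra.
From mathcomp Require Import fingroup perm.
From mathcomp Require Import reals.
Set Implicit Arguments. Unset Strict Implicit. Unset Printing Implicit Defensive.
Import Order.TTheory GRing.Theory Num.Theory.
Local Open Scope ring_scope.

(* A family F = (F_1,...,F_m) of subsets of P = 'I_n is a function 'I_m -> {set 'I_n}
   (repetitions allowed). *)

Definition intersecting n m (F : 'I_m -> {set 'I_n}) : Prop :=
  forall i j : 'I_m, F i :&: F j != set0.

Definition regular n m (F : 'I_m -> {set 'I_n}) : Prop :=
  exists d : nat, forall p : 'I_n, #|[set i : 'I_m | p \in F i]| = d.

Definition uniform n m (F : 'I_m -> {set 'I_n}) : Prop :=
  exists k : nat, forall i : 'I_m, #|F i| = k.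

(* {phi(A) : A in F} = F as families (multisets): some permutation sigma of the
   indices with phi(F_i) = F_(sigma i). *)
Definition symmetric_family n m (F : 'I_m -> {set 'I_n}) : Prop :=
  forall p q : 'I_n, exists phi : {perm 'I_n},
    phi p = q /\ exists sigma : {perm 'I_m}, forall i, phi @: F i = F (sigma i).

Definition balanceable (R : realType) n m (F : 'I_m -> {set 'I_n}) : Prop :=
  exists (w : 'I_m -> R) (s : 'I_m -> 'I_m -> 'I_n -> R),
    [/\ (forall i, 0 <= w i <= 1),
        \sum_(i < m) w i = 1 &
        (forall i j p, 0 <= s i j p <= 1)] /\
    [/\
        (forall i j, \sum_(p < n) s i j p = 1),
        (forall i j p, 0 < s i j p -> p \in F i :&: F j) &
        (forall p : 'I_n,
           \sum_(i < m) \sum_(j < m) w i * w j * s i j p = n%:R^-1)].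

(* Main.v *)
Require Import Defs.
From HB Require Import structures.
From mathcomp Require Import all_boot all_order all_algebra.
From mathcomp Require Import fingroup perm.
From mathcomp Require Import reals.
From mathcomp Require Import ring lra.

Module Helpers.
Set Implicit Arguments. Unset Strict Implicit. Unset Printing Implicit Defensive.
Import Order.TTheory GRing.Theory Num.Theory.
Local Open Scope ring_scope.

Section P1.
Variables (R : realType) (n m : nat) (F : 'I_m -> {set 'I_n}).
Hypothesis hm : (0 < m)%N.
Hypothesis hsym : symmetric_family F.
Hypothesis hint : intersecting F.

Definition s0 (i j : 'I_m) (p : 'I_n) : R :=
  if [pick x in F i :&: F j] is Some x then (x == p)%:R else 0.

Lemma s0_ge0 i j p : 0 <= s0 i j p.
Proof. by rewrite /s0; case: pickP => // x _; rewrite ler0n. Qed.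

Lemma s0_le1 i j p : s0 i j p <= 1.
Proof. by rewrite /s0; case: pickP => // x _; rewrite lern1 leq_b1. Qed.

Lemma s0_pos i j p : 0 < s0 i j p -> p \in F i :&: F j.
Proof.
rewrite /s0; case: pickP => [x Hx|]; last by rewrite ltxx.
by case: eqP => [<- //|]; rewrite ltxx.
Qed.

Lemma s0_sum i j : \sum_p s0 i j p = 1.
Proof.
rewrite /s0; case: pickP => [x Hx|H0].
  rewrite (bigD1 x) //= eqxx big1 ?addr0 // => p /negbTE.
  by rewrite eq_sym => ->.
by move: (hint i j); case/set0Pn => x; rewrite H0.
Qed.

Lemma s0_sum_perm i j (f : {perm 'I_n}) : \sum_p s0 i j (f p) = 1.
Proof. by rewrite -(s0_sum i j) [RHS](reindex_inj (@perm_inj _ f)). Qed.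

Definition A : {set {perm 'I_n} * {perm 'I_m}} :=
  [set a : {perm 'I_n} * {perm 'I_m} | [forall i, a.1 @: F i == F (a.2 i)]].

Lemma inA (a : {perm 'I_n} * {perm 'I_m}) : a \in A -> forall i, a.1 @: F i = F (a.2 i).
Proof. by rewrite inE => /forallP H i; apply/eqP. Qed.

Lemma oneA : ((1%g : {perm 'I_n}), (1%g : {perm 'I_m})) \in A.
Proof.
rewrite inE; apply/forallP => i /=; rewrite perm1.
apply/eqP; rewrite -[RHS]imset_id; apply: eq_imset => x; by rewrite perm1.
Qed.

Lemma cardA : (0 < #|A|)%N.
Proof. by apply/card_gt0P; exists (1%g,1%g); exact: oneA. Qed.

Definition s i j p : R :=
  #|A|%:R^-1 * \sum_(a in A) s0 (a.2 i) (a.2 j) (a.1 p).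

Lemma s_ge0 i j p : 0 <= s i j p.
Proof.
by rewrite /s mulr_ge0 // ?invr_ge0 ?ler0n // sumr_ge0 // => a _; apply: s0_ge0.
Qed.

Lemma s_sum i j : \sum_p s i j p = 1.
Proof.
rewrite /s -mulr_sumr exchange_big /=.
rewrite (eq_bigr (fun _ => 1)); last first.
  by move=> a _; rewrite s0_sum_perm.
by rewrite sumr_const mulVf // pnatr_eq0 -lt0n cardA.
Qed.

Lemma s_le1 i j p : s i j p <= 1.
Proof.
rewrite -(s_sum i j) (bigD1 p) //= lerDl sumr_ge0 // => q _; exact: s_ge0.
Qed.

Lemma s_pos i j p : 0 < s i j p -> p \in F i :&: F j.
Proof.
apply: contraTT => Hp; rewrite /s big1 ?mulr0 ?ltxx // => a Ha.
apply/eqP; rewrite eq_le s0_ge0 andbT leNgt; apply/negP => /s0_pos.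
rewrite -!(inA Ha) !in_setI !mem_imset; try exact: perm_inj.
by rewrite -in_setI (negbTE Hp).
Qed.

Definition G (a : {perm 'I_n} * {perm 'I_m}) p : R :=
  \sum_i \sum_j s0 (a.2 i) (a.2 j) (a.1 p).

Definition S p := \sum_(a in A) G a p.

Lemma S_const p q : S p = S q.
Proof.
have [psi [Hpsi [tau Htau]]] := hsym q p.
pose h (a : {perm 'I_n} * {perm 'I_m}) := (psi * a.1, tau * a.2)%g.
have hinj : injective h.
  move=> [a1 a2] [b1 b2]; rewrite /h /= => -[/mulgI -> /mulgI ->] //.
have hA : h @: A = A.
  apply/eqP; rewrite eqEcard card_imset // leqnn andbT.
  apply/subsetP => _ /imsetP [a Ha ->]; rewrite inE; apply/forallP => i /=.
  rewrite permM -(inA Ha) -Htau -imset_comp; apply/eqP/eq_imset => x.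
  by rewrite /= permM.
rewrite /S -{2}hA big_imset /=; last by move=> x y _ _; apply: hinj.
apply: eq_bigr => a _; rewrite /G /=.
rewrite (reindex_inj (@perm_inj _ tau)); apply: eq_bigr => i _.
rewrite (reindex_inj (@perm_inj _ tau)); apply: eq_bigr => j _.
by rewrite !permM Hpsi.
Qed.

Lemma S_sum : \sum_p S p = (#|A| * m * m)%:R.
Proof.
rewrite /S exchange_big /= natrM natrM -mulrA -sumr_const mulr_suml.
apply: eq_bigr => a _; rewrite mul1r /G exchange_big /=.
rewrite (eq_bigr (fun _ => (m%:R : R))) ?sumr_const ?card_ord ?mulr_natr //.
move=> i _; rewrite exchange_big /= (eq_bigr (fun _ => 1)) ?sumr_const ?card_ord //.
move=> j _; exact: s0_sum_perm.
Qed.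

Lemma n_gt0 : (0 < n)%N.
Proof. by case/set0Pn: (hint (Ordinal hm) (Ordinal hm)) => x _; case: n x => [[]|]. Qed.

Lemma S_val p : S p = (#|A| * m * m)%:R / n%:R.
Proof.
have : \sum_q S q = n%:R * S p.
  rewrite (eq_bigr (fun _ => S p)) ?sumr_const ?card_ord ?mulr_natl // => q _.
  exact: S_const.
rewrite S_sum => ->; have hn : n%:R != 0 :> R by rewrite pnatr_eq0 -lt0n n_gt0.
by field.
Qed.

Lemma part1 : balanceable R F.
Proof.
have hn : n%:R != 0 :> R by rewrite pnatr_eq0 -lt0n n_gt0.
have hm' : m%:R != 0 :> R by rewrite pnatr_eq0 -lt0n hm.
have hA : #|A|%:R != 0 :> R by rewrite pnatr_eq0 -lt0n cardA.
exists (fun _ => m%:R^-1), s; split; split.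
- move=> i; rewrite invr_ge0 ler0n /= invf_le1 ?ltr0n // ler1n //.
- by rewrite sumr_const card_ord -mulr_natr; field.
- by move=> i j p; rewrite s_ge0 s_le1.
- exact: s_sum.
- exact: s_pos.
move=> p.
transitivity (\sum_i \sum_j \sum_(a in A)
   (m%:R^-1 * m%:R^-1 * #|A|%:R^-1) * s0 (a.2 i) (a.2 j) (a.1 p)).
  by apply: eq_bigr => i _; apply: eq_bigr => j _; rewrite /s mulrA mulr_sumr.
under eq_bigr do rewrite exchange_big /=.
rewrite exchange_big /=.
transitivity ((m%:R^-1 * m%:R^-1 * #|A|%:R^-1) * S p).
  rewrite /S /G mulr_sumr; apply: eq_bigr => a _.
  rewrite mulr_sumr; apply: eq_bigr => i _; by rewrite mulr_sumr.
rewrite S_val !natrM; field; by rewrite hn hA hm'.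
Qed.

End P1.

Lemma mass_bound (R : realType) n m (F : 'I_m -> {set 'I_n}) (w : 'I_m -> R)
  (s : 'I_m -> 'I_m -> 'I_n -> R) (T : {set 'I_n}) (I : {set 'I_m}) :
  (forall i, 0 <= w i <= 1) ->
  (forall i j p, 0 <= s i j p <= 1) ->
  (forall i j, \sum_(p < n) s i j p = 1) ->
  (forall i j p, 0 < s i j p -> p \in F i :&: F j) ->
  (forall p : 'I_n, \sum_(i < m) \sum_(j < m) w i * w j * s i j p = n%:R^-1) ->
  (forall i j p, p \in T -> p \in F i :&: F j -> (i \in I) && (j \in I)) ->
  #|T|%:R / n%:R <= (\sum_(i in I) w i) ^+ 2.
Proof.
move=> hw hs hsum hpos hbal hTI.
have -> : #|T|%:R / n%:R = \sum_(p in T) (n%:R^-1 : R).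
  by rewrite sumr_const mulr_natl.
rewrite (eq_bigr _ (fun p _ => esym (hbal p))).
rewrite exchange_big /=.
rewrite expr2 big_distrlr /= [X in _ <= X]big_mkcond /=.
apply: ler_sum => i _.
have s0 : forall j p, p \in T -> ~~ ((i \in I) && (j \in I)) -> w i * w j * s i j p = 0.
  move=> j p Hp Hij; suff -> : s i j p = 0 by rewrite mulr0.
  apply/eqP; rewrite eq_le; case/andP: (hs i j p) => -> _; rewrite andbT leNgt.
  by apply/negP => /hpos /(hTI _ _ _ Hp); apply/negP.
rewrite exchange_big /=.
case: ifP => Hi; last first.
  rewrite big1 // => j _; rewrite big1 // => p Hp; apply: s0 => //.
  by rewrite Hi.
rewrite [X in _ <= X]big_mkcond /=.
apply: ler_sum => j _.
have wij : 0 <= w i * w j by apply: mulr_ge0; case/andP: (hw i); case/andP: (hw j).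
case: ifP => Hj; last first.
  by rewrite big1 // => p Hp; apply: s0 => //; rewrite Hj andbF.
rewrite -mulr_sumr ler_piMr //.
rewrite -(hsum i j) [X in _ <= X](bigID (fun p => p \in T)) /= lerDl.
by apply: sumr_ge0 => p _; case/andP: (hs i j p).
Qed.

Lemma card_set_sum n (P : pred 'I_n) : #|[set x | P x]| = (\sum_(x < n) (P x : nat))%N.
Proof.
rewrite -sum1_card big_mkcond /=; apply: eq_bigr => i _.
by rewrite inE; case: (P i).
Qed.

Definition fF3 (i p : nat) : bool :=
  match i with
  | 0 => p \in [:: 0;1;2;6;7]
  | 1 => p \in [:: 0;1;2;8;9]
  | 2 => p \in [:: 3;4;5;6;8]
  | _ => p \in [:: 3;4;5;7;9] end.
Definition F3 (i : 'I_4) : {set 'I_10} := [set p : 'I_10 | fF3 i p].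

Lemma F3_uniform : uniform F3.
Proof.
exists 5%N => i; rewrite card_set_sum !big_ord_recr big_ord0 /=.
by case: i => [[|[|[|[|i]]]] Hi].
Qed.

Lemma F3_regular : regular F3.
Proof.
exists 2%N => p; rewrite card_set_sum !big_ord_recr big_ord0 /= !inE /=.
by case: p => [[|[|[|[|[|[|[|[|[|[|p]]]]]]]]]] Hp].
Qed.

Definition wit (i j : nat) := find (fun p => fF3 i p && fF3 j p) (iota 0 10).

Lemma F3_intersecting : intersecting F3.
Proof.
move=> i j; apply/set0Pn; exists (inord (wit i j)); rewrite !inE inordK.
  by case: i => [[|[|[|[|i]]]] Hi]; case: j => [[|[|[|[|j]]]] Hj].
by case: i => [[|[|[|[|i]]]] Hi]; case: j => [[|[|[|[|j]]]] Hj].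
Qed.

Lemma F3_not_bal (R : realType) : ~ balanceable R F3.
Proof.
move=> [w [s [[hw hsum1 hs] [hsum hpos hbal]]]].
pose I1 := [set i : 'I_4 | (i < 2)%N].
have h1 := mass_bound (T := [set p : 'I_10 | (p < 3)%N]) (I := I1) hw hs hsum hpos hbal.
have h2 := mass_bound (T := [set p : 'I_10 | (3 <= p < 6)%N]) (I := ~: I1) hw hs hsum hpos hbal.
rewrite !card_set_sum !big_ord_recr big_ord0 /= in h1.
rewrite !card_set_sum !big_ord_recr big_ord0 /= in h2.
have {h1} h1 : (3%:R / 10%:R : R) <= (\sum_(i in I1) w i) ^+ 2.
  apply: h1 => i j p; rewrite !inE => Hp /andP [Hi Hj].
  by case: i Hi => [[|[|[|[|i]]]] Hi] //; case: j Hj => [[|[|[|[|j]]]] Hj] //;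
     case: p Hp => [[|[|[|[|[|[|[|[|[|[|p]]]]]]]]]] Hp].
have {h2} h2 : (3%:R / 10%:R : R) <= (\sum_(i in ~: I1) w i) ^+ 2.
  apply: h2 => i j p; rewrite !inE => Hp /andP [Hi Hj].
  by case: i Hi => [[|[|[|[|i]]]] Hi] //; case: j Hj => [[|[|[|[|j]]]] Hj] //;
     case: p Hp => [[|[|[|[|[|[|[|[|[|[|p]]]]]]]]]] Hp].
have hab : \sum_(i in I1) w i + \sum_(i in ~: I1) w i = 1.
  rewrite -hsum1 [RHS](bigID (fun i => i \in I1)) /=; congr (_ + _).
  by apply: eq_bigl => i; rewrite inE.
have ha : 0 <= \sum_(i in I1) w i by apply: sumr_ge0 => i _; case/andP: (hw i).
have hb : 0 <= \sum_(i in ~: I1) w i by apply: sumr_ge0 => i _; case/andP: (hw i).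
move: h1 h2 hab ha hb.
set a := \sum_(i in I1) w i; set b := \sum_(i in ~: I1) w i.
move=> h1 h2 hab ha hb.
have e : b = 1 - a by rewrite -hab; ring.
rewrite e in h2 hb.
have H1 : 0 <= (1 - a) * (a ^+ 2 - 3%:R / 10%:R) by apply: mulr_ge0; lra.
have H2 : 0 <= a * ((1 - a) ^+ 2 - 3%:R / 10%:R) by apply: mulr_ge0; lra.
have H3 : 0 <= (2%:R * a - 1) ^+ 2 by apply: sqr_ge0.
nra.
Qed.



Lemma deg_inv n m (F : 'I_m -> {set 'I_n}) : symmetric_family F ->
  forall p q, #|[set i | p \in F i]| = #|[set i | q \in F i]|.
Proof.
move=> hs p q; have [phi [Hp [sig Hs]]] := hs p q.
rewrite !card_set_sum [RHS](reindex_inj (@perm_inj _ sig)) /=.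
apply: eq_bigr => i _; rewrite -Hs -Hp mem_imset //; apply: perm_inj.
Qed.

Definition fF2 (i p : nat) : bool :=
  match i with
  | 0 => p \in [:: 0;1]
  | 1 => p \in [:: 0;2]
  | 2 => p \in [:: 1;2]
  | _ => p \in [:: 0;1] end.
Definition F2 (i : 'I_4) : {set 'I_3} := [set p : 'I_3 | fF2 i p].
Definition key (i : nat) : nat := if i == 3 then 0 else i.
Definition snat (i j p : nat) : nat :=
  if fF2 i p && fF2 j p then (if key i == key j then 1 else 2) else 0.

Section P2.
Variable R : realType.
Definition w2 (i : 'I_4) : R := (if (i == 1 :> nat) || (i == 2 :> nat) then 2 else 1)%N%:R / 6%:R.
Definition s2 (i j : 'I_4) (p : 'I_3) : R := (snat i j p)%:R / 2%:R.

Lemma F2_bal : balanceable R F2.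
Proof.
exists w2, s2; split; split.
- by move=> i; case: i => [[|[|[|[|i]]]] Hi] //; rewrite /w2 /=; apply/andP; split; lra.
- rewrite !big_ord_recr big_ord0 /w2 /=; lra.
- move=> i j p; have : (snat i j p <= 2)%N.
    by rewrite /snat; case: ifP => _ //; case: ifP.
  rewrite /s2 -(ler_nat R) => h; apply/andP; split; first by rewrite divr_ge0 ?ler0n.
  rewrite ler_pdivrMr ?ltr0n // mul1r //.
- move=> i j; rewrite !big_ord_recr big_ord0 /s2 /=.
  by case: i => [[|[|[|[|i]]]] Hi] //; case: j => [[|[|[|[|j]]]] Hj] //; rewrite /snat /key /=; lra.
- move=> i j p; rewrite /s2 pmulr_lgt0 ?invr_gt0 ?ltr0n // /snat !inE.
  by case: (fF2 i p); case: (fF2 j p).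
- move=> p; rewrite !big_ord_recr !big_ord0 /w2 /s2 /=.
  by case: p => [[|[|[|p]]] Hp] //; rewrite /snat /key /=; lra.
Qed.

Lemma F2_not_reg : ~ regular F2.
Proof.
move=> [d Hd]; have := Hd ord0; have := Hd (inord 2%N).
rewrite !card_set_sum !big_ord_recr !big_ord0 /= !inE /= inordK //.
by move=> <-.
Qed.

Lemma F2_not_sym : ~ symmetric_family F2.
Proof.
move=> hs; have := deg_inv hs ord0 (inord 2%N).
rewrite !card_set_sum !big_ord_recr !big_ord0 /= !inE /= inordK //.
Qed.

Lemma F2_uniform : uniform F2.
Proof.
exists 2%N => i; rewrite card_set_sum !big_ord_recr big_ord0 /=.
by case: i => [[|[|[|[|i]]]] Hi].
Qed.
End P2.
End Helpers.

Theorem theorem5 (R : realType) :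
  (forall (n m : nat) (F : 'I_m -> {set 'I_n}),
      (0 < m)%N -> symmetric_family F -> intersecting F -> balanceable R F)
  /\
  (exists (n m : nat) (F : 'I_m -> {set 'I_n}),
      (0 < m)%N /\ uniform F /\ balanceable R F /\ ~ regular F /\ ~ symmetric_family F)
  /\
  (exists (n m : nat) (F : 'I_m -> {set 'I_n}),
      (0 < m)%N /\ uniform F /\ regular F /\ intersecting F /\ ~ balanceable R F).
Proof.
split; [|split].
- move=> n m F hm hs hi; exact: (Helpers.part1 R hm hs hi).
- exists 3%N, 4%N, Helpers.F2; split; first by [].
  split; first exact: Helpers.F2_uniform.
  split; first exact: Helpers.F2_bal.
  split; [exact: Helpers.F2_not_reg | exact: Helpers.F2_not_sym].
- exists 10%N, 4%N, Helpers.F3; split; first by [].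
  split; first exact: Helpers.F3_uniform.
  split; first exact: Helpers.F3_regular.
  split; first exact: Helpers.F3_intersecting.
  exact: Helpers.F3_not_bal.
Qed.
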